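(* For every tree $T$, $\varphi(T)=\varphi_r(T)$.
   Context: A proper $k$-coloring of $G$ is a surjective map $c:V(G)\to\{1,\ldots,k\}$ with $c(u)\ne c(v)$ for every edge $uv$. In a proper $k$-coloring, a vertex of color $i$ is a b-vertex if it has a neighbor of every color $j\ne i$. A b-$k$-coloring is a proper $k$-coloring in which every color class contains a b-vertex; $\varphi(G)$ is the largest $k$ such that $G$ has a b-$k$-coloring, and the b-relaxed number is $\varphi_r(G)=\max\{\varphi(H): H\text{ an induced subgraph of }G\}$. *)

(* Defs.v *)
From mathcomp Require Import all_boot.
Set Implicit Arguments. Unset Strict Implicit. Unset Printing Implicit Defensive.

Definition simple_graph (V : finType) (e : rel V) : Prop :=
  irreflexive e /\ symmetric e.

Definition connected_graph (V : finType) (e : rel V) : Prop :=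
  forall x y : V, connect e x y.

Definition acyclic_graph (V : finType) (e : rel V) : Prop :=
  forall c : seq V, 3 <= size c -> uniq c -> ~~ cycle e c.

Definition is_tree (V : finType) (e : rel V) : Prop :=
  simple_graph e /\ 0 < #|V| /\ connected_graph e /\ acyclic_graph e.

(* b-k-coloring of the induced subgraph G[S]; only the values of c on S matter.
   Colors are 'I_k (i.e. {0,..,k-1}, standing for {1,..,k}). *)
Definition is_bcoloring (V : finType) (e : rel V) (S : {set V}) (k : nat)
    (c : V -> 'I_k) : bool :=
  [forall x in S, forall y in S, e x y ==> (c x != c y)] &&
  [forall i : 'I_k, exists x in S, c x == i] &&
  (* every color class contains a b-vertex *)
  [forall i : 'I_k, exists x in S, (c x == i) &&
      [forall j : 'I_k, (j != i) ==> [exists y in S, e x y && (c y == j)]]].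

Definition has_bcoloring (V : finType) (e : rel V) (S : {set V}) (k : nat) : bool :=
  [exists c : {ffun V -> 'I_k}, @is_bcoloring V e S k c].

(* phi(G[S]): largest k admitting a b-k-coloring (k <= |S| <= |V| by surjectivity) *)
Definition bchrom (V : finType) (e : rel V) (S : {set V}) : nat :=
  \max_(k < #|V|.+1 | has_bcoloring e S k) k.

Definition bchrom_graph (V : finType) (e : rel V) : nat := bchrom e [set: V].

Definition brelaxed (V : finType) (e : rel V) : nat :=
  \max_(S : {set V}) bchrom e S.

(* Main.v *)
Require Import Defs.
From mathcomp Require Import all_boot.
From mathcomp Require Import zify.
Set Implicit Arguments. Unset Strict Implicit. Unset Printing Implicit Defensive.

Section Proof.
Variables (V : finType) (e : rel V).
Hypothesis irr : irreflexive e.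
Hypothesis sym : symmetric e.
Hypothesis acyc : acyclic_graph e.

Definition ev (v : V) : rel V := fun x y => [&& e x y, x != v & y != v].

Lemma ev_sym v : symmetric (ev v).
Proof. move=> x y; rewrite /ev sym; congr andb; by rewrite andbC. Qed.

Definition reg v w := [set x | connect (ev v) w x].

Lemma path_ev_neq v w p : path (ev v) w p -> all (fun z => z != v) p.
Proof.
elim: p w => //= y p IH w /andP[/and3P[_ _ yv] /IH ->]; by rewrite yv.
Qed.

Lemma reg_self v w : w \in reg v w.
Proof. by rewrite inE connect0. Qed.

Lemma reg_closed v w x y : x \in reg v w -> e x y -> x != v -> y != v -> y \in reg v w.
Proof.
rewrite !inE => cx exy xv yv; apply: connect_trans cx _; apply: connect1.
by rewrite /ev exy xv yv.
Qed.

Lemma reg_disj v w w' x : e v w -> e v w' -> w != w' ->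
  x \in reg v w -> x \in reg v w' -> False.
Proof.
move=> ew ew' neq; rewrite !inE => cw cw'.
have : connect (ev v) w w'.
  apply: connect_trans cw _; by rewrite (sym_connect_sym (@ev_sym v)).
case/connectP => p pp lp.
move: lp; case/shortenP: pp => p' pp' up' _ lp'.
have wv : w != v by apply/eqP => wv; move: ew; rewrite wv irr.
have allp := path_ev_neq pp'.
have H1 : 3 <= size (v :: w :: p').
  case: p' {pp' up' allp} lp' => [|? ?] /=; last by [].
  by move=> h; rewrite h eqxx in neq.
have H2 : uniq (v :: w :: p').
  rewrite cons_uniq up' andbT inE negb_or eq_sym wv /=.
  by apply/negP => /(allP allp); rewrite eqxx.
have H3 : cycle e (v :: w :: p').
  rewrite /= ew /= rcons_path (sub_path _ pp') /=; last by move=> ? ? /and3P[].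
  by rewrite -lp' sym.
by move: (acyc H1 H2); rewrite H3.
Qed.

Definition bvP (S : {set V}) k (c : V -> 'I_k) x : Prop :=
  forall j, j != c x -> exists2 y, y \in S & e x y /\ c y = j.

Lemma bcolE (S : {set V}) k (c : V -> 'I_k) : is_bcoloring e S c ->
  (forall x y, x \in S -> y \in S -> e x y -> c x != c y) /\
  (forall i, exists2 x, x \in S & c x = i /\ bvP S c x).
Proof.
case/andP => /andP[/forallP pr _] /forallP bv; split.
  move=> x y xS yS exy.
  by move: (pr x) => /implyP/(_ xS)/forallP/(_ y)/implyP/(_ yS)/implyP; apply.
move=> i; case/existsP: (bv i) => x /and3P[xS /eqP cx /forallP H]; exists x => //.
split=> // j ji.
rewrite cx in ji; have := H j; rewrite ji /= => /existsP[y /and3P[yS exy /eqP cy]]; by exists y.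
Qed.

Lemma bcolI (S : {set V}) k (c : V -> 'I_k) :
  (forall x y, x \in S -> y \in S -> e x y -> c x != c y) ->
  (forall i, exists2 x, x \in S & c x = i /\ bvP S c x) -> is_bcoloring e S c.
Proof.
move=> pr cov; apply/andP; split; first (apply/andP; split).
- apply/forallP => x; apply/implyP => xS; apply/forallP => y; apply/implyP => yS.
  apply/implyP; exact: pr.
- apply/forallP => i; case: (cov i) => x xS [cx _]; apply/existsP; exists x.
  by rewrite xS cx eqxx.
- apply/forallP => i; case: (cov i) => x xS [cx bx]; apply/existsP; exists x.
  rewrite xS cx eqxx /=.
  apply/forallP => j; apply/implyP => ji; rewrite -cx in ji.
  case: (bx j ji) => y yS [exy cy].
  apply/existsP; exists y; by rewrite yS exy cy eqxx.
Qed.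

Lemma has_of (S : {set V}) k (f : V -> 'I_k) : is_bcoloring e S f -> has_bcoloring e S k.
Proof.
case/bcolE => pr cov; apply/existsP; exists (finfun f); apply: bcolI.
  by move=> x y xS yS exy; rewrite !ffunE; apply: pr.
move=> i; case: (cov i) => x xS [cx bx]; exists x => //; rewrite ffunE; split=> // j.
rewrite ffunE => /bx [y yS [exy cy]]; exists y => //; by rewrite ffunE.
Qed.

Section Step.
Variables (S : {set V}) (k : nat) (c : V -> 'I_k) (v : V).
Hypothesis vS : v \notin S.
Hypothesis pr : forall x y, x \in S -> y \in S -> e x y -> c x != c y.

Definition U (a : 'I_k) :=
  [set x in S | [exists w in S, [&& e v w, c w == a & x \in reg v w]]].
Definition sw (a b i : 'I_k) := if i == a then b else if i == b then a else i.

Lemma swK a b : involutive (sw a b).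
Proof.
move=> i; rewrite /sw.
case: (eqVneq i a) => [->|ia]; first by rewrite eqxx; case: eqVneq.
case: (eqVneq i b) => [->|ib]; first by rewrite eqxx.
by rewrite (negbTE ia) (negbTE ib).
Qed.

Lemma sw_aa a i : sw a a i = i.
Proof. by rewrite /sw; case: eqVneq => [->|]. Qed.

Lemma sw_other a b i : i != a -> i != b -> sw a b i = i.
Proof. by rewrite /sw => /negbTE -> /negbTE ->. Qed.

Definition c' (a b : 'I_k) x :=
  if x == v then a else if x \in U a then sw a b (c x) else c x.

Lemma notvS x : x \in S -> x != v.
Proof. by move=> xS; apply/eqP => xv; move: vS; rewrite -xv xS. Qed.

Lemma U_sub a x : x \in U a -> x \in S.
Proof. by rewrite inE => /andP[]. Qed.

Lemma U_edge a x y : x \in S -> y \in S -> e x y -> x \in U a -> y \in U a.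
Proof.
move=> xS yS exy; rewrite !inE xS yS /= => /existsP[w /and4P[wS evw cw xr]].
apply/existsP; exists w; rewrite wS evw cw /=.
exact: reg_closed xr exy (notvS xS) (notvS yS).
Qed.

Lemma U_edge_eq a x y : x \in S -> y \in S -> e x y -> (x \in U a) = (y \in U a).
Proof.
move=> xS yS exy; apply/idP/idP; first exact: U_edge.
by apply: U_edge => //; rewrite sym.
Qed.

Lemma U_nb a w : w \in S -> e v w -> (w \in U a) = (c w == a).
Proof.
move=> wS evw; apply/idP/idP.
- rewrite inE wS => /existsP[w0 /and4P[w0S ev0 /eqP c0 wr]].
  case: (eqVneq w0 w) => [<-|ne]; first by rewrite c0.
  by case: (reg_disj ev0 evw ne wr (reg_self _ _)).
- move=> cw; rewrite inE wS; apply/existsP; exists w; by rewrite wS evw cw reg_self.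
Qed.

Lemma U_disj a a' x : a != a' -> x \in U a -> x \in U a' -> False.
Proof.
move=> aa; rewrite !inE => /andP[_ /existsP[w /and4P[wS evw /eqP cw xr]]].
move=> /andP[_ /existsP[w' /and4P[wS' evw' /eqP cw' xr']]].
have ne : w != w' by apply/eqP => ww; rewrite -ww cw in cw'; rewrite cw' eqxx in aa.
exact: reg_disj evw evw' ne xr xr'.
Qed.

Lemma c'_S a b x : x \in S -> c' a b x = if x \in U a then sw a b (c x) else c x.
Proof. by move=> xS; rewrite /c' (negbTE (notvS xS)). Qed.

Lemma c'_pr a b : (a != b \/ (forall y, y \in S -> e v y -> c y != a)) ->
  forall x y, x \in v |: S -> y \in v |: S -> e x y -> c' a b x != c' a b y.
Proof.
move=> hab.
have nbv : forall y, y \in S -> e v y -> c' a b y != a.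
  move=> y yS evy; rewrite c'_S // U_nb //.
  case: (eqVneq (c y) a) => [cy|//].
  rewrite cy /sw eqxx; case: hab => [|H]; first by rewrite eq_sym.
  by move: (H y yS evy); rewrite cy eqxx.
move=> x y; rewrite !inE => /predU1P[->|xS] /predU1P[->|yS] exy.
- by rewrite irr in exy.
- by rewrite {1}/c' eqxx eq_sym; apply: nbv.
- by rewrite {2}/c' eqxx; apply: nbv; rewrite // sym.
- rewrite !c'_S // -(U_edge_eq a xS yS exy).
  case: (x \in U a); last exact: pr.
  by rewrite (inj_eq (can_inj (swK a b))); apply: pr.
Qed.

Lemma c'_bv a b x : x \in S -> bvP S c x -> bvP (v |: S) (c' a b) x.
Proof.
move=> xS bx j; rewrite c'_S //.
case: (boolP (x \in U a)) => xU ji.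
- have ji' : sw a b j != c x by rewrite -(inj_eq (can_inj (swK a b))) swK.
  case: (bx _ ji') => y yS [exy cy]; exists y; first by rewrite inE yS orbT.
  by rewrite c'_S // -(U_edge_eq a xS yS exy) xU cy swK.
- case: (bx _ ji) => y yS [exy cy]; exists y; first by rewrite inE yS orbT.
  by rewrite c'_S // -(U_edge_eq a xS yS exy) (negbTE xU) cy.
Qed.

Lemma c'_bvv a b : (forall j, j != a -> exists2 w, w \in S & e v w /\ c w = j) ->
  bvP (v |: S) (c' a b) v.
Proof.
move=> H j; rewrite {1}/c' eqxx => ja; case: (H j ja) => w wS [evw cw].
exists w; first by rewrite inE wS orbT.
by rewrite c'_S // U_nb // cw (negbTE ja).
Qed.

End Step.

Lemma ord2_cases (j : 'I_2) : j != ord_max -> j = ord0.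
Proof. by case: j => [[|[|m]]] // ? _; apply/val_inj. Qed.

Lemma step (S : {set V}) k v : 1 < k -> v \notin S -> has_bcoloring e S k ->
  has_bcoloring e (v |: S) k.
Proof.
move=> k2 vS /existsP[cf /bcolE [pr cov]].
have inS x : x \in S -> x \in v |: S by move=> xS; rewrite inE xS orbT.
case: (boolP [exists a : 'I_k, [forall y in S, e v y ==> (cf y != a)]]).
  case/existsP => a /forallP Ha.
  have Ha' : forall y, y \in S -> e v y -> cf y != a.
    by move=> y yS evy; move: (Ha y); rewrite yS evy.
  apply: (has_of (f := c' S cf v a a)); apply: bcolI; first exact: c'_pr (or_intror Ha').
  move=> i; case: (cov i) => x xS [cx bx]; exists x; first exact: inS.
  split; last exact: c'_bv.
  by rewrite c'_S //; case: ifP; rewrite ?sw_aa.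
move/existsPn => HB0.
have HB : forall a, exists2 w, w \in S & e v w /\ cf w = a.
  move=> a; move: (HB0 a); rewrite negb_forall => /existsP[y].
  by rewrite negb_imply => /andP[yS]; rewrite negb_imply negbK => /andP[evy /eqP cy]; exists y.
have gen : forall a b, a != b ->
    (exists2 x, x \in v |: S & c' S cf v a b x = b /\ bvP (v |: S) (c' S cf v a b) x) ->
    has_bcoloring e (v |: S) k.
  move=> a b ab Hb; apply: (has_of (f := c' S cf v a b)); apply: bcolI.
    exact: c'_pr (or_introl ab).
  move=> i; case: (eqVneq i a) => [->|ia].
    exists v; first by rewrite setU11.
    split; first by rewrite /c' eqxx.
    by apply: c'_bvv => // j _; apply: HB.
  case: (eqVneq i b) => [->|ib]; first exact: Hb.
  case: (cov i) => x xS [cx bx]; exists x; first exact: inS.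
  split; last exact: c'_bv.
  by rewrite c'_S //; case: ifP; rewrite ?cx ?sw_other.
have [k2e|k3] : k = 2 \/ 2 < k by lia.
  subst k.
  apply: (gen ord0 ord_max) => //.
  case: (HB ord0) => w wS [evw cw].
  exists w; first exact: inS.
  have wU : w \in U S cf v ord0 by rewrite U_nb // cw eqxx.
  split; first by rewrite c'_S // wU cw /sw eqxx.
  move=> j; rewrite c'_S // wU cw /sw eqxx => /ord2_cases ->; exists v; first by rewrite setU11.
  by rewrite sym evw /c' eqxx.
pose o0 := Ordinal (ltn_trans (isT : 0 < 1) k2).
pose o1 := Ordinal k2.
pose o2 := Ordinal k3.
case: (cov o1) => x xS [cx bx].
have H1 a : a != o1 -> x \notin U S cf v a -> has_bcoloring e (v |: S) k.
  move=> a1 xU; apply: (gen a o1 a1); exists x; first exact: inS.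
  by split; [rewrite c'_S // (negbTE xU) cx | exact: c'_bv].
case: (boolP (x \in U S cf v o0)) => x0; last exact: (H1 o0).
apply: (H1 o2) => //; apply/negP => x2.
by apply: (U_disj (a := o0) (a' := o2) _ x0 x2).
Qed.


Lemma ord2_cases0 (j : 'I_2) : j != ord0 -> j = ord_max.
Proof. by case: j => [[|[|m]]] // ? _; apply/val_inj. Qed.

Lemma grow k : 1 < k -> forall S, has_bcoloring e S k -> has_bcoloring e [set: V] k.
Proof.
move=> k2; suff H : forall n (S : {set V}), #|V| - #|S| <= n -> has_bcoloring e S k ->
    has_bcoloring e [set: V] k by move=> S; apply: (H #|V|); rewrite leq_subr.
elim=> [|n IH] S hn hS; (case: (eqVneq S setT) => [eS|nS]; first by rewrite -eS);
  have : ~~ (setT \subset S) by move: nS; rewrite eqEsubset subsetT.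
all: case/subsetPn => v _ vS.
all: have c1 : #|v |: S| = #|S|.+1 by rewrite cardsU1 vS.
all: have c2 : #|v |: S| <= #|V| by apply: max_card.
  by lia.
apply: (IH (v |: S)); first by lia.
exact: step.
Qed.

Lemma bchrom_le (S : {set V}) : bchrom e S <= bchrom e [set: V].
Proof.
rewrite /bchrom; apply/bigmax_leqP => /= [[k kV]] /= hk.
have [k2|k1] := ltnP 1 k.
  by apply: (leq_bigmax_cond (Ordinal kV)); exact: grow hk.
case: (posnP k) => [-> //|k0].
have ke : k = 1 by lia.
subst k.
case/existsP: hk => cf /bcolE [_ cov]; case: (cov ord0) => x0 _ _.
case: (boolP [exists x, exists y, e x y]).
  case/existsP => x /existsP[y exy].
  have xy : x != y by apply/eqP => xy; rewrite xy irr in exy.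
  have h2 : has_bcoloring e [set x; y] 2.
    apply: (has_of (f := fun z => if z == x then ord0 else (ord_max : 'I_2))).
    have yx : (y == x) = false by rewrite eq_sym (negbTE xy).
    apply: bcolI.
      move=> a b; rewrite !inE => /orP[]/eqP-> /orP[]/eqP-> exab;
        rewrite ?irr // in exab; by rewrite ?eqxx ?yx.
    move=> i; case: (eqVneq i ord0) => [->|/ord2_cases0 ->].
      exists x; first by rewrite !inE eqxx.
      split; first by rewrite eqxx.
      move=> j; rewrite eqxx => /ord2_cases0 ->; exists y; first by rewrite !inE eqxx orbT.
      by rewrite exy yx.
    exists y; first by rewrite !inE eqxx orbT.
    split; first by rewrite yx.
    move=> j; rewrite yx => /ord2_cases ->; exists x; first by rewrite !inE eqxx.
    by rewrite sym exy eqxx.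
  have c2 : 2 <= #|V| by move: (max_card [set x; y]); rewrite cards2 xy.
  apply: leq_trans (leq_bigmax_cond (Ordinal (c2 : 2 < #|V|.+1)) _) => //.
  exact: grow h2.
move/existsPn => noe.
have c1 : 0 < #|V| by apply/card_gt0P; exists x0.
apply: leq_trans (leq_bigmax_cond (Ordinal (c1 : 1 < #|V|.+1)) _) => //.
apply: (has_of (f := fun _ => (ord0 : 'I_1))); apply: bcolI.
  move=> a b _ _ eab; move: (noe a); rewrite negb_exists => /forallP/(_ b).
  by rewrite eab.
move=> i; exists x0; first by rewrite inE.
split; first by rewrite (ord1 i).
by move=> j; rewrite (ord1 j) eqxx.
Qed.

End Proof.

Theorem mainTheorem18 (V : finType) (e : rel V) :
  is_tree e -> bchrom_graph e = brelaxed e.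
Proof.
move=> [[irr sym] [_ [_ acyc]]].
rewrite /bchrom_graph /brelaxed; apply/eqP; rewrite eqn_leq.
rewrite (leq_bigmax_cond (P := predT) (F := fun S => bchrom e S) [set: V]) //=.
apply/bigmax_leqP => S _; exact: bchrom_le.
Qed.
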